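(* Let $(S^{(n)})$ be a sequence of $n\times n$ matrices with non-negative entries satisfying Assumption 2. Then for every $\varepsilon\in(0,1]$, \[ \sup_n\operatorname{perm}\left(I_n+(1-\varepsilon)S^{(n)}\right)<\infty, \] where $\operatorname{perm}$ denotes the permanent.
   Context: Assumption 2: for each $\varepsilon\in(0,1]$, $\liminf_n\min_{\gamma\in[0,1-\varepsilon]}\det(I_n-\gamma S^{(n)})>0$. *)

(* Defs.v *)
From HB Require Import structures.
From mathcomp Require Import all_boot all_order all_algebra all_fingroup.
From mathcomp Require Import reals.
Set Implicit Arguments. Unset Strict Implicit. Unset Printing Implicit Defensive.
Import Order.TTheory GRing.Theory Num.Theory.
Local Open Scope ring_scope.

Definition permanent (R : comNzRingType) (n : nat) (A : 'M[R]_n) : R :=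
  \sum_(s : 'S_n) \prod_(i < n) A i (s i).

(* Assumption 2: for each eps in (0,1],
   liminf_n min_{gamma in [0,1-eps]} det(I_n - gamma S^(n)) > 0,
   unfolded as: there are c > 0 and N such that for all n >= N and all
   gamma in [0, 1-eps], det(I_n - gamma S^(n)) >= c. *)
Definition assumption2 (R : realType) (S : forall n : nat, 'M[R]_n) : Prop :=
  forall eps : R, 0 < eps -> eps <= 1 ->
    exists2 c : R, 0 < c &
      exists N : nat, forall n : nat, (N <= n)%N ->
        forall gamma : R, 0 <= gamma -> gamma <= 1 - eps ->
          c <= \det (1%:M - gamma *: S n).

(* Main.v *)
Require Import Defs.
From HB Require Import structures.
From mathcomp Require Import all_boot all_order all_algebra all_fingroup.
From mathcomp Require Import reals.
From mathcomp Require Import ring lra.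
Import Order.TTheory GRing.Theory Num.Theory.

Local Open Scope ring_scope.
Section Alg.
Variable R : realType.
Variable n : nat.
Implicit Types (B X Y : 'M[R]_n) (D : {set 'I_n}).

Definition AD D B : 'M[R]_n := \matrix_(i, j) if i \in D then 0 else B i j.
Definition nng B := forall i j, 0 <= B i j.

Lemma ADE D B i j : AD D B i j = if i \in D then 0 else B i j.
Proof. by rewrite mxE. Qed.

Lemma AD_scale D B (g : R) : AD D (g *: B) = g *: AD D B.
Proof. by apply/matrixP => i j; rewrite !mxE; case: ifP; rewrite ?mulr0. Qed.

Lemma AD_setT B : AD setT B = 0.
Proof. by apply/matrixP => i j; rewrite !mxE in_setT. Qed.

Lemma AD_set0 B : AD set0 B = B.
Proof. by apply/matrixP => i j; rewrite !mxE in_set0. Qed.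

Lemma cof_rows X X' (m j : 'I_n) : (forall i k, i != m -> X i k = X' i k) ->
  cofactor X m j = cofactor X' m j.
Proof.
move=> H; rewrite /cofactor; congr (_ * \det _).
by apply/matrixP => i k; rewrite !mxE H // eq_sym neq_lift.
Qed.

Lemma det_split X X' (m : 'I_n) : (forall i k, i != m -> X i k = X' i k) ->
  \det X = \det X' + \sum_k (X m k - X' m k) * \adj X' k m.
Proof.
move=> H; rewrite (expand_det_row X m) (expand_det_row X' m) -big_split /=.
apply: eq_bigr => k _; rewrite mxE (cof_rows _ _ m k H); ring.
Qed.

Lemma SM X X' (m i j : 'I_n) : (forall i k, i != m -> X i k = X' i k) ->
  X \in unitmx -> X' \in unitmx ->
  invmx X i j = invmx X' i j +
     invmx X i m * \sum_l (X' m l - X m l) * invmx X' l j.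
Proof.
move=> H uX uX'.
have E : invmx X - invmx X' = invmx X *m (X' - X) *m invmx X'.
  rewrite mulmxBr mulmxBl -!mulmxA (mulmxV uX') mulmx1 mulmxA (mulVmx uX) mul1mx.
  by [].

have E' := congr1 (fun M : 'M[R]_n => M i j) E; simpl in E'.
rewrite [LHS](_ : _ = invmx X' i j + (invmx X i j - invmx X' i j)); last by ring.
congr (_ + _).
rewrite (_ : invmx X i j - invmx X' i j = (invmx X - invmx X') i j); last by rewrite !mxE.
rewrite E' mxE.
transitivity (\sum_k invmx X i m * (X' m k - X m k) * invmx X' k j).
  apply: eq_bigr => k _; congr (_ * _); rewrite mxE (bigD1 m) //= big1 ?addr0.
    by rewrite !mxE.
  by move=> l lm; rewrite !mxE (H l k lm) subrr mulr0.
rewrite big_distrr /=; apply: eq_bigr => l _; ring.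
Qed.

Lemma adj_inv X (i j : 'I_n) : \det X != 0 -> \adj X i j = \det X * invmx X i j.
Proof.
move=> d0; rewrite /invmx unitmxE unitfE d0 [in RHS]mxE mulrA mulfV // mul1r.
by [].
Qed.

Lemma rows_AD D B (m : 'I_n) : m \notin D -> forall i k, i != m ->
  (1%:M - AD D B) i k = (1%:M - AD (m |: D) B) i k.
Proof. by move=> mD i k im; rewrite !mxE in_setU1 (negPf im). Qed.

Lemma rowm_AD D B (m k : 'I_n) : m \notin D ->
  (1%:M - AD (m |: D) B) m k - (1%:M - AD D B) m k = B m k.
Proof. by move=> mD; rewrite !mxE setU11 (negPf mD) /=; ring. Qed.

Lemma unit_pos X : 0 < \det X -> X \in unitmx.
Proof. by move=> h; rewrite unitmxE unitfE gt_eqF. Qed.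

Lemma inv_step D B (m : 'I_n) : m \notin D -> nng B ->
  0 < \det (1%:M - AD D B) -> 0 < \det (1%:M - AD (m |: D) B) ->
  (forall i j, 0 <= invmx (1%:M - AD (m |: D) B) i j) ->
  forall i j, invmx (1%:M - AD (m |: D) B) i j <= invmx (1%:M - AD D B) i j.
Proof.
move=> mD Bn dX dX' Y'n.
set X := 1%:M - AD D B; set X' := 1%:M - AD (m |: D) B.
set Y := invmx X; set Y' := invmx X'.
have Hr := @rows_AD D B m mD.
pose c j := \sum_l (X' m l - X m l) * Y' l j.
have c0 j : 0 <= c j.
  by apply: sumr_ge0 => l _; rewrite (@rowm_AD D B m l mD) mulr_ge0.
have hS i j : Y i j = Y' i j + Y i m * c j.
  by apply: SM => //; apply: unit_pos.
have hD : \det X = \det X' * (1 - c m).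
  rewrite (det_split _ _ _ Hr) mulrBr mulr1 big_distrr /= -sumrN; congr (_ + _).
  apply: eq_bigr => k _; by rewrite adj_inv ?gt_eqF // mulrCA -mulrN -mulNr opprB.
have c1 : 0 < 1 - c m.
  by move: dX; rewrite hD pmulr_rgt0.
have Yim i : 0 <= Y i m.
  have : Y i m * (1 - c m) = Y' i m by rewrite mulrBr mulr1 {1}hS; ring.
  by move=> e; rewrite -(pmulr_lge0 _ c1) e.
by move=> i j; rewrite hS lerDl mulr_ge0.
Qed.

Definition rrep X (m j : 'I_n) : 'M[R]_n :=
  \matrix_(i, k) if i == m then (j == k)%:R else X i k.

Lemma rrep_m X (m j k : 'I_n) : rrep X m j m k = (j == k)%:R.
Proof. by rewrite mxE eqxx. Qed.

Lemma rrep_o X (m j i k : 'I_n) : i != m -> rrep X m j i k = X i k.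
Proof. by move=> im; rewrite mxE (negPf im). Qed.

Lemma prod2 (F : 'I_n -> R) (j m : 'I_n) : j != m ->
  \prod_i F i = F j * F m * \prod_(i | (i != j) && (i != m)) F i.
Proof.
move=> jm; rewrite (bigD1 j) //= (bigD1 m) /=; last by rewrite eq_sym.
by rewrite mulrA.
Qed.

Lemma prod1 (F : 'I_n -> R) (m : 'I_n) :
  \prod_i F i = F m * \prod_(i | i != m) F i.
Proof. by rewrite (bigD1 m). Qed.

Lemma perm_row X (m : 'I_n) :
  permanent X = \sum_j X m j * permanent (rrep X m j).
Proof.
rewrite /permanent.
have E j (s : 'S_n) : \prod_i rrep X m j i (s i) =
    (j == s m)%:R * \prod_(i | i != m) X i (s i).
  rewrite (prod1 _ m) !mxE eqxx; congr (_ * _).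
  by apply: eq_bigr => i im; rewrite mxE (negPf im).
rewrite (eq_bigr (fun j => \sum_(s : 'S_n) X m j * \prod_i rrep X m j i (s i))); last first.
  move=> j _; rewrite mulr_sumr. done.
rewrite exchange_big /=; apply: eq_bigr => s _.
rewrite (prod1 _ m) [RHS](bigD1 (s m)) //= E eqxx mul1r [X in _ = _ + X]big1 ?addr0 //.
by move=> j js; rewrite E (negPf js) mul0r mulr0.
Qed.

Lemma perm_dup X (m m' l : 'I_n) : m != m' ->
  (forall k, X m k = (l == k)%:R) -> (forall k, X m' k = (l == k)%:R) ->
  permanent X = 0.
Proof.
move=> mm' H1 H2; rewrite /permanent big1 // => s _.
rewrite (prod2 _ _ _ mm') H1 H2.
have : s m != s m' by rewrite (inj_eq perm_inj).
case: (eqVneq l (s m)) => [<-|lm]; last by rewrite !mul0r.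
by move/negPf => ->; rewrite mulr0 mul0r.
Qed.

Lemma perm_swap X (m j k : 'I_n) : m != j ->
  permanent (rrep (rrep X m j) j k) = permanent (rrep (rrep X j j) m k).
Proof.
move=> mj; rewrite /permanent.
rewrite [RHS](reindex_inj (mulIg (tperm j k))) /=.
apply: eq_bigr => s _.
have jm : j != m by rewrite eq_sym.
rewrite (prod2 _ _ _ jm) (prod2 (fun i => rrep (rrep X j j) m k i ((s * tperm j k)%g i)) _ _ jm).
rewrite !permM !rrep_m (rrep_o _ _ _ _ _ jm) rrep_m (rrep_o _ _ _ _ _ mj) rrep_m.
have tE a b : (a == tperm j k b) = (tperm j k a == b).
  by rewrite -{1}(tpermK j k a) (inj_eq (@perm_inj _ (tperm j k))).
rewrite tE tE tpermL tpermR.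
case: (eqVneq k (s j)) => [ksj|h]; last by rewrite !mul0r.
case: (eqVneq j (s m)) => [jsm|h]; last by rewrite mulr0 !mul0r.
rewrite !mul1r; apply: eq_bigr => i /andP [ij im].
rewrite (rrep_o _ _ _ _ _ ij) (rrep_o _ _ _ _ _ im) (rrep_o _ _ _ _ _ im) (rrep_o _ _ _ _ _ ij) permM tpermD //.
  by rewrite jsm (inj_eq perm_inj) eq_sym.
by rewrite ksj (inj_eq perm_inj) eq_sym.
Qed.

Lemma perm_mono X X' : (forall i j, 0 <= X i j <= X' i j) ->
  permanent X <= permanent X'.
Proof.
move=> H; rewrite /permanent; apply: ler_sum => s _.
by apply: ler_prod => i _; apply: H.
Qed.

Lemma perm_nng X : nng X -> 0 <= permanent X.
Proof.
move=> H; rewrite /permanent; apply: sumr_ge0 => s _.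
by apply: prodr_ge0 => i _.
Qed.

Lemma permanent1 : permanent (1%:M : 'M[R]_n) = 1.
Proof.
rewrite /permanent (bigD1 1%g) //= [X in _ + X]big1 ?addr0.
  by apply: big1 => i _; rewrite perm1 mxE eqxx.
move=> s s1; have : ~~ [forall i, s i == i].
  apply: contra s1 => /forallP h; apply/eqP/permP => i; rewrite perm1.
  exact/eqP.
rewrite negb_forall => /existsP [i si].
by rewrite (bigD1 i) //= mxE eq_sym (negPf si) mul0r.
Qed.

Definition pathpos D B := forall g : R, 0 <= g -> g <= 1 ->
  0 < \det (1%:M - g *: AD D B).
Definition invnn D B := forall i j, 0 <= invmx (1%:M - AD D B) i j.

Lemma AD_all D B : (forall i, i \in D) -> AD D B = 0.
Proof. by move=> h; apply/matrixP => i j; rewrite !mxE h. Qed.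

Lemma card_step D (m : 'I_n) : m \notin D -> (#|~: (m |: D)| < #|~: D|)%N.
Proof.
move=> mD; rewrite setCU; apply: proper_card; rewrite properEneq subsetIr andbT.
apply/negP => /eqP h.
have : m \in ~: D by rewrite in_setC.
by rewrite -h !inE eqxx.
Qed.

Lemma full_or D : (forall i, i \in D) \/ exists m, m \notin D.
Proof.
case: (boolP [forall i, i \in D]) => [/forallP h|]; [by left|].
by rewrite negb_forall => /existsP [m hm]; right; exists m.
Qed.

Lemma AD_nng D B : nng B -> nng (AD D B).
Proof. by move=> h i j; rewrite mxE; case: ifP. Qed.

Lemma nng_scale B (g : R) : 0 <= g -> nng B -> nng (g *: B).
Proof. by move=> g0 h i j; rewrite mxE mulr_ge0. Qed.

Lemma rowm_unit D B (m k : 'I_n) : (1%:M - AD (m |: D) B) m k = (m == k)%:R.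
Proof. by rewrite !mxE setU11 subr0. Qed.

Lemma AD_mono D B (j i k : 'I_n) : nng B -> AD (j |: D) B i k <= AD D B i k.
Proof.
move=> Bn; rewrite !mxE in_setU1.
by case: (i == j); case: (i \in D) => //=.
Qed.

Lemma addE X Y (i j : 'I_n) : (X + Y) i j = X i j + Y i j.
Proof. by rewrite mxE. Qed.

Lemma unitE (i j : 'I_n) : (1%:M : 'M[R]_n) i j = (i == j)%:R.
Proof. by rewrite mxE. Qed.

Lemma AD_out D B (i j : 'I_n) : i \notin D -> AD D B i j = B i j.
Proof. by move=> h; rewrite mxE (negPf h). Qed.

Lemma AD_in D B (i j : 'I_n) : i \in D -> AD D B i j = 0.
Proof. by move=> h; rewrite mxE h. Qed.
End Alg.

From mathcomp Require Import boolp classical_sets topology normedtype derive.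
Import numFieldNormedType.Exports.
Local Open Scope classical_set_scope.

Section Anal.
Variable R : realType.

Lemma near_ex (a : R) (P : R -> Prop) : (\forall t \near a, P t) ->
  exists2 e : R, 0 < e & forall t, `|a - t| < e -> P t.
Proof. by move/nbhs_normP => [e e0 H]; exists e => // t; apply: H. Qed.
Arguments near_ex {a P}.

Lemma E2 (h : R -> R) (a : R) : continuous h -> 0 < a ->
  (forall x, 0 <= x -> x < a -> 0 <= h x) -> 0 <= h a.
Proof.
move=> hc a0 H; rewrite leNgt; apply/negP => ha.
have Hn : \forall t \near a, h t < 0 by exact: (cvgr_lt (h a) (hc a) 0 ha).
case: (near_ex Hn) => e e0 He.
have m0 : 0 < Num.min e a by rewrite lt_min e0.
have me : Num.min e a <= e by rewrite ge_min lexx.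
have ma : Num.min e a <= a by rewrite ge_min lexx orbT.
pose t := a - Num.min e a / 2.
have ht : `|a - t| < e.
  rewrite /t opprB addrC subrK ger0_norm; last by rewrite divr_ge0 ?ltW.
  rewrite ltr_pdivrMr // (le_lt_trans me) //.
  by rewrite ltr_pMr // ltr1n.
have := He t ht; rewrite ltNge H //.
- rewrite /t subr_ge0 ler_pdivrMr // (le_trans ma) //.
  by rewrite ler_pMr // ler1n.
- by rewrite /t ltrBlDr ltrDl divr_gt0.
Qed.

Lemma E1 (g : R -> R) (b : R) : continuous g -> 0 < g 0 -> 0 <= b -> g b <= 0 ->
  exists s, [/\ 0 < s, s <= b, g s <= 0 & forall x, 0 <= x -> x < s -> 0 < g x].
Proof.
move=> gc g0 b0 gb.
pose T := [set x : R | 0 <= x /\ x <= b /\ g x <= 0].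
have Tne : T !=set0 by exists b.
have Tlb : has_lbound T by exists 0 => x [].
have inf0 : 0 <= inf T by apply: lb_le_inf => // x [].
have infb : inf T <= b by apply: (ge_inf Tlb); split.
have ginf : g (inf T) <= 0.
  rewrite leNgt; apply/negP => gi.
  have Hn : \forall t \near inf T, 0 < g t by exact: (cvgr_gt (g (inf T)) (gc (inf T)) 0 gi).
  case: (near_ex Hn) => e e0 He.
  have [y Ty yl] := inf_adherent e0 (conj Tne Tlb).
  have iy : inf T <= y by apply: (ge_inf Tlb).
  have gy : 0 < g y.
    by apply: He; rewrite distrC ger0_norm ?subr_ge0 // ltrBlDl.
  by case: Ty => _ [_]; rewrite leNgt gy.
exists (inf T); split => //.
- rewrite lt_neqAle inf0 andbT; apply/negP => /eqP i0.
  by move: ginf; rewrite -i0 leNgt g0.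
- move=> x x0 xi; rewrite ltNge; apply/negP => gx.
  have Tx : T x by split => //; split => //; rewrite (le_trans (ltW xi)).
  by move: xi; rewrite ltNge (ge_inf Tlb).
Qed.
Lemma cont_det k (c : R) (C0 C1 : 'M[R]_k) :
  continuous (fun x : R => c * \det (C0 + x *: C1)).
Proof.
pose P := c%:P * \det (map_mx polyC C0 + 'X *: map_mx polyC C1).
suff -> : (fun x => c * \det (C0 + x *: C1)) = horner P by exact: continuous_horner.
apply: funext => x; rewrite /P hornerCM -horner_evalE -det_map_mx; congr (_ * \det _).
apply/matrixP => i j; rewrite !mxE /=.
by rewrite horner_evalE !hornerE mulrC.
Qed.
End Anal.
Local Close Scope classical_set_scope.
Arguments nng_scale {R n}. Arguments E1 {R g b}. Arguments E2 {R h a}. Arguments cont_det {R k}.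
Arguments adj_inv {R n}. Arguments AD_nng {R n}. Arguments card_step {n}.
Arguments full_or {n}. Arguments AD_all {R n}. Arguments inv_step {R n}.
Arguments perm_row {R n}. Arguments perm_dup {R n}. Arguments perm_swap {R n}.
Arguments perm_mono {R n}. Arguments perm_nng {R n}. Arguments unit_pos {R n}.
Arguments det_split {R n}. Arguments SM {R n}.
Arguments nng {R n}. Arguments pathpos {R n}. Arguments invnn {R n}. Arguments AD {R n}. Arguments rrep {R n}.

Section Main.
Variable R : realType.
Variable n : nat.
Implicit Types (B X Y : 'M[R]_n) (D : {set 'I_n}).

Lemma adj_cont B (k m : 'I_n) :
  continuous (fun x : R => \adj (1%:M - x *: B) k m).
Proof.
have -> : (fun x : R => \adj (1%:M - x *: B) k m) =
  (fun x => (-1) ^+ (m + k) * \det (row' m (col' k 1%:M) + x *: row' m (col' k (- B)))).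
  apply: funext => x; rewrite mxE /cofactor; congr (_ * \det _).
  by apply/matrixP => i j; rewrite !mxE mulrN.
exact: cont_det.
Qed.

Lemma prop_step D B (m : 'I_n) : m \notin D -> nng B ->
  (forall B', nng B' -> pathpos (m |: D) B' -> invnn (m |: D) B') ->
  pathpos D B -> pathpos (m |: D) B.
Proof.
move=> mD Bn IH PD g g0 g1; rewrite ltNge; apply/negP => hg.
set C := AD (m |: D) B.
pose G x := \det (1%:M - x *: C).
have Gc : continuous G.
  have -> : G = (fun x => 1 * \det (1%:M + x *: (- C))).
    by apply: funext => x; rewrite /G scalerN mul1r.
  exact: cont_det.
have G0 : 0 < G 0 by rewrite /G scale0r subr0 det1 ltr01.
have [s [s0 sg Gs Gpos]] := E1 Gc G0 g0 hg.
have adjpos k x : 0 <= x -> x < s -> 0 <= \adj (1%:M - x *: C) k m.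
  move=> x0 xs.
  have P' : pathpos (m |: D) (x *: B).
    move=> t t0 t1; rewrite AD_scale scalerA; apply: Gpos; first exact: mulr_ge0.
    by apply: le_lt_trans xs; rewrite ler_piMl.
  have := IH _ (nng_scale _ _ x0 Bn) P' k m; rewrite AD_scale -/C => h.
  by rewrite adj_inv ?gt_eqF ?Gpos // mulr_ge0 // ltW // Gpos.
have adjs k : 0 <= \adj (1%:M - s *: C) k m.
  apply: (E2 (h := fun x => \adj (1%:M - x *: C) k m)) => //.
    exact: adj_cont.
  by move=> x x0 xs; apply: adjpos.
have := PD s (ltW s0) (le_trans sg g1).
rewrite -AD_scale (det_split _ _ _ (@rows_AD _ _ D (s *: B) m mD)).
rewrite ltNge; move/negP; apply.
rewrite AD_scale -/C -[X in _ <= X]addr0 lerD //.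
rewrite -oppr_ge0 -sumrN; apply: sumr_ge0 => k _.
rewrite -mulNr opprB.
have -> : (1%:M - s *: C) m k - (1%:M - AD D (s *: B)) m k = (s *: B) m k.
  by rewrite /C -AD_scale; apply: rowm_AD.
by rewrite mulr_ge0 // mxE mulr_ge0 // ltW.
Qed.

Lemma nfull_pos D (m : 'I_n) : m \notin D -> (0 < #|~: D|)%N.
Proof. by move=> mD; apply/card_gt0P; exists m; rewrite inE. Qed.

Lemma invnn_all k : forall D, (#|~: D| <= k)%N -> forall B, nng B ->
  pathpos D B -> invnn D B.
Proof.
elim: k => [|k IH] D hD B Bn PD.
  case: (full_or D) => [h|[m mD]].
    by rewrite /invnn AD_all // subr0 invmx1 => i j; rewrite mxE ler0n.
  by move: (nfull_pos _ _ mD); rewrite ltnNge hD.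
case: (full_or D) => [h|[m mD]].
  by rewrite /invnn AD_all // subr0 invmx1 => i j; rewrite mxE ler0n.
have hD' : (#|~: (m |: D)| <= k)%N.
  by rewrite -ltnS (leq_trans (card_step _ _ mD)).
have PD' : pathpos (m |: D) B.
  by apply: prop_step => // B' Bn' P'; apply: IH.
have d1 : forall E, pathpos E B -> 0 < \det (1%:M - AD E B).
  by move=> E PE; have := PE 1 ler01 (lexx _); rewrite scale1r.
move=> i j; apply: le_trans (inv_step _ _ _ mD Bn (d1 _ PD) (d1 _ PD') _ i j).
  exact: (IH _ hD' _ Bn PD').
exact: (IH _ hD' _ Bn PD').
Qed.

Lemma pathpos_up D B (m : 'I_n) : nng B -> pathpos D B -> pathpos (m |: D) B.
Proof.
move=> Bn PD; case: (boolP (m \in D)) => mD.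
  have -> : m |: D = D.
    by apply/setP => x; rewrite !inE; case: eqP => // ->.
  by [].
apply: prop_step => // B' Bn' P'.
exact: (invnn_all _ _ (leqnn _) _ Bn' P').
Qed.

Lemma pathpos_inv D B : nng B -> pathpos D B -> invnn D B.
Proof. by move=> Bn PD; apply: (invnn_all _ _ (leqnn _) _ Bn PD). Qed.

Lemma pathpos_det D B : pathpos D B -> 0 < \det (1%:M - AD D B).
Proof. by move=> PE; have := PE 1 ler01 (lexx _); rewrite scale1r. Qed.
End Main.

Arguments pathpos_det {R n D B}. Arguments pathpos_inv {R n D B}.
Arguments pathpos_up {R n D B}. Arguments invnn_all {R n}. Arguments prop_step {R n}.
Arguments rows_AD {R n}. Arguments cof_rows {R n}. Arguments rowm_AD {R n}.
Arguments rrep_m {R n}. Arguments AD_mono {R n}. Arguments addE {R n}. Arguments unitE {R n}. Arguments AD_out {R n}. Arguments AD_in {R n}. Arguments rowm_unit {R n}. Arguments rrep_o {R n}.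

Section Perm.
Variable R : realType.
Variable n : nat.
Variable A : 'M[R]_n.
Hypothesis An : nng A.
Implicit Types (D : {set 'I_n}).

Let M D : 'M[R]_n := 1%:M + AD D A.
Let X D : 'M[R]_n := 1%:M - AD D A.
Let Y D : 'M[R]_n := invmx (X D).
Let P D : R := permanent (M D).

Lemma F1 D : pathpos D A -> forall i j,
  Y D i j = (i == j)%:R + \sum_k AD D A i k * Y D k j.
Proof.
move=> PD i j.
have u : X D \in unitmx by apply: unit_pos; apply: pathpos_det.
have e : Y D = 1%:M + AD D A *m Y D.
  have := mulmxV u; rewrite /X mulmxBl mul1mx => h.
  by rewrite -h /Y /X subrK.
by rewrite {1}e !mxE.
Qed.

Lemma F2 D : pathpos D A -> forall i j, 0 <= Y D i j.
Proof. by move=> PD; apply: pathpos_inv. Qed.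

Lemma F3 D (m : 'I_n) : pathpos D A -> m \notin D -> forall i j,
  Y (m |: D) i j <= Y D i j.
Proof.
move=> PD mD; apply: inv_step => //; try by apply: pathpos_det.
  by apply: pathpos_det; apply: pathpos_up.
by apply: pathpos_inv => //; apply: pathpos_up.
Qed.

Lemma F4 D (m : 'I_n) : pathpos D A -> 1 <= Y D m m.
Proof.
move=> PD; rewrite F1 // eqxx lerDl; apply: sumr_ge0 => k _.
by rewrite mulr_ge0 //; [apply: AD_nng | apply: F2].
Qed.

Lemma F5 D (m : 'I_n) : pathpos D A -> m \notin D ->
  Y D m m * \det (X D) = \det (X (m |: D)).
Proof.
move=> PD mD; have d := pathpos_det PD.
rewrite /Y /invmx unit_pos // mxE mulrAC mulVf ?gt_eqF // mul1r mxE.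
rewrite (cof_rows (X D) (X (m |: D)) m m); last by apply: rows_AD.
rewrite [RHS](expand_det_row _ m) (bigD1 m) //= big1 ?addr0.
  by rewrite rowm_unit eqxx mul1r.
by move=> k km; rewrite rowm_unit eq_sym (negPf km) mul0r.
Qed.

Lemma F6 D (m : 'I_n) : rrep (M D) m m = M (m |: D).
Proof.
apply/matrixP => i k; rewrite !mxE in_setU1.
by case: eqP => [->|]; rewrite ?addr0.
Qed.

Lemma F7 D (j k : 'I_n) : j \in D -> M D j k = (j == k)%:R.
Proof. by move=> jD; rewrite !mxE jD addr0. Qed.

Lemma F8 D (j k : 'I_n) : j \notin D -> M D j k = (j == k)%:R + A j k.
Proof. by move=> jD; rewrite !mxE (negPf jD). Qed.

Lemma F9 D (j : 'I_n) : P (j |: D) <= P D.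
Proof.
apply: perm_mono => i k; rewrite /M !addE.
rewrite addr_ge0 ?unitE ?ler0n //=; last by apply: AD_nng.
by rewrite lerD2l ?unitE ?ler0n //; apply: AD_mono.
Qed.

Lemma F10 D : 0 <= P D.
Proof.
by apply: perm_nng => i k; rewrite /M addE addr_ge0 ?unitE ?ler0n //; apply: AD_nng.
Qed.


Lemma Zb k : forall D, (#|~: D| <= k)%N -> pathpos D A -> forall m j : 'I_n,
  m \notin D -> j \notin D -> j != m ->
  permanent (rrep (M D) m j) <= Y D j m * P (m |: D).
Proof.
elim: k => [|k IH] D hD PD m j mD jD jm.
  by move: (nfull_pos _ _ _ jD); rewrite ltnNge hD.
have PD' : pathpos (j |: D) A := pathpos_up j An PD.
have hD' : (#|~: (j |: D)| <= k)%N.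
  by rewrite -ltnS (leq_trans (card_step _ _ jD)).
have mj : m != j by rewrite eq_sym.
have Pn := F10 (m |: D).
have Yn := F2 _ PD.
have bound l : (rrep (M D) m j) j l * permanent (rrep (rrep (M D) m j) j l)
    <= A j l * Y D l m * P (m |: D).
  rewrite (rrep_o _ _ _ _ _ jm) F8 //.
  case: (eqVneq l j) => [->|lj].
    rewrite (perm_dup _ m j j mj) ?mulr0 ?mulr_ge0 //.
      by move=> k'; rewrite (rrep_o _ _ _ _ _ mj) rrep_m.
    by move=> k'; rewrite rrep_m.
  have jl : j != l by rewrite eq_sym.
  case: (boolP (l \in D)) => lD.
    rewrite (perm_dup _ j l l jl) ?mulr0 ?mulr_ge0 //.
      by move=> k'; rewrite rrep_m.
    have lm : l != m by apply: contraNneq mD => <-.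
    by move=> k'; rewrite (rrep_o _ _ _ _ _ lj) (rrep_o _ _ _ _ _ lm) F7.
  rewrite ?mulr0n add0r (perm_swap _ _ _ _ mj) F6 -mulrA ler_wpM2l //.
  case: (eqVneq l m) => [->|lm].
    rewrite F6.
    apply: le_trans (_ : P (m |: D) <= _); last by rewrite ler_peMl //; apply: F4.
    by rewrite /P finset.setUCA; apply: F9.
  have mD' : m \notin j |: D by rewrite in_setU1 negb_or mj.
  have lD' : l \notin j |: D by rewrite in_setU1 negb_or lj.
  apply: le_trans (IH _ hD' PD' m l mD' lD' lm) _.
  apply: ler_pM.
  - exact: F2.
  - exact: F10.
  - exact: F3.
  - by rewrite finset.setUCA; apply: F9.
rewrite (perm_row _ j).
apply: (@le_trans _ _ (\sum_l A j l * Y D l m * P (m |: D))).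
  by apply: ler_sum => l _; apply: bound.
rewrite -mulr_suml ler_wpM2r // (F1 _ PD j m) (negPf jm) add0r.
by apply: ler_sum => l _; rewrite AD_out.
Qed.

Lemma Qb k : forall D, (#|~: D| <= k)%N -> pathpos D A -> P D * \det (X D) <= 1.
Proof.
have full D : (forall i, i \in D) -> P D * \det (X D) <= 1.
  by move=> h; rewrite /P /M /X AD_all // addr0 subr0 permanent1 det1 mulr1.
elim: k => [|k IH] D hD PD; case: (full_or D) => [h|[m mD]]; try exact: full.
  by move: (nfull_pos _ _ _ mD); rewrite ltnNge hD.
have PD' : pathpos (m |: D) A := pathpos_up m An PD.
have hD' : (#|~: (m |: D)| <= k)%N.
  by rewrite -ltnS (leq_trans (card_step _ _ mD)).
have Pn := F10 (m |: D).
have Yn := F2 _ PD.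
have hP : P D <= Y D m m * P (m |: D).
  have bound l : M D m l * permanent (rrep (M D) m l) <=
      (m == l)%:R * P (m |: D) + A m l * Y D l m * P (m |: D).
    rewrite F8 //.
    case: (eqVneq l m) => [->|lm].
      rewrite F6 ?eqxx mulrDl mul1r lerD2l -mulrA ler_wpM2l //.
      by rewrite ler_peMl //; apply: F4.
    have ml : m != l by rewrite eq_sym.
    rewrite ?(negPf ml) ?mulr0n add0r mul0r add0r.
    case: (boolP (l \in D)) => lD.
      rewrite (perm_dup _ m l l ml) ?mulr0 ?mulr_ge0 //.
        by move=> k'; rewrite rrep_m.
      by move=> k'; rewrite (rrep_o _ _ _ _ _ lm) F7.
    by rewrite -mulrA ler_wpM2l //; apply: (Zb _ _ (leqnn _) PD).
  rewrite {1}/P (perm_row _ m).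
  apply: (@le_trans _ _ (\sum_l ((m == l)%:R * P (m |: D) + A m l * Y D l m * P (m |: D)))).
    by apply: ler_sum => l _; apply: bound.
  rewrite big_split /= (bigD1 m) //= ?eqxx mul1r big1 ?addr0; last first.
    by move=> l lm; rewrite eq_sym (negPf lm) mul0r.
  rewrite -mulr_suml (F1 _ PD m m) ?eqxx.
  rewrite [X in _ <= (_ + X) * _](eq_bigr (fun k => A m k * Y D k m)); last first.
    by move=> l _; rewrite AD_out.
  by rewrite ?mulr1n mulrDl mul1r.
have dX : 0 <= \det (X D) by apply: ltW; apply: pathpos_det.
apply: le_trans (ler_wpM2r dX hP) _.
by rewrite mulrAC F5 // mulrC; apply: IH.
Qed.
End Perm.

Lemma key (R : realType) (n : nat) (A : 'M[R]_n) : nng A ->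
  pathpos (finset.set0 : {set 'I_n}) A ->
  permanent (1%:M + A) * \det (1%:M - A) <= 1.
Proof.
move=> An P0; have := @Qb R n A An _ finset.set0 (leqnn _) P0.
by rewrite AD_set0.
Qed.

Theorem lemma3p4 (R : realType) (S : forall n : nat, 'M[R]_n) :
  (forall (n : nat) (i j : 'I_n), 0 <= S n i j) ->
  assumption2 S ->
  forall eps : R, 0 < eps -> eps <= 1 ->
    exists M : R, forall n : nat,
      permanent (1%:M + (1 - eps) *: S n) <= M.
Proof.
move=> Sn A2 eps e0 e1.
have [c c0 [N HN]] := A2 eps e0 e1.
exists (c^-1 + \sum_(i < N) `|permanent (1%:M + (1 - eps) *: S i)|).
move=> n.
have s0 : 0 <= \sum_(i < N) `|permanent (1%:M + (1 - eps) *: S i)|.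
  by apply: sumr_ge0 => i _.
have ci : 0 <= c^-1 by rewrite invr_ge0 ltW.
have ee : 0 <= 1 - eps by rewrite subr_ge0.
case: (ltnP n N) => [nN | Nn].
  apply: le_trans (ler_norm _) _.
  apply: le_trans (_ : _ <= \sum_(i < N) `|permanent (1%:M + (1 - eps) *: S i)|) _.
    by rewrite (bigD1 (Ordinal nN)) //= lerDl sumr_ge0.
  by rewrite lerDr.
set B := (1 - eps) *: S n.
have Bn : nng B by move=> i j; rewrite mxE mulr_ge0.
have PB : pathpos (finset.set0 : {set 'I_n}) B.
  move=> g g0 g1; rewrite AD_set0 /B scalerA.
  apply: lt_le_trans c0 (HN n Nn _ _ _); first exact: mulr_ge0.
  by rewrite ler_piMl.
have K := @key R n B Bn PB.
have dc : c <= \det (1%:M - B) by apply: HN.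
have dpos : 0 < \det (1%:M - B) by apply: lt_le_trans dc.
apply: le_trans (_ : _ <= c^-1) _; last by rewrite lerDl.
rewrite -ler_pdivlMr // in K.
apply: le_trans K _; rewrite mul1r lef_pV2 ?posrE //.
Qed.
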